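(* A functional $\Lambda$-system algebra over a set $\mathcal{X}$ that has consistently chosen fixed points is composition-order invariant if and only if it is connection-order invariant.
   Context: Let $\Lambda,\mathcal{X}$ be sets. For finite disjoint $\mathcal{I},\mathcal{O}\subseteq\Lambda$ let $\mathfrak{S}_{\mathcal{I},\mathcal{O}}$ be a set of functions $s:\mathcal{X}^{\mathcal{I}}\to\mathcal{X}^{\mathcal{O}}$ ($\mathcal{X}^{\mathcal{I}}$ = functions $\mathcal{I}\to\mathcal{X}$) and $\mathfrak{S}$ their union. For $s\in\mathfrak{S}_{\mathcal{I},\mathcal{O}}$, $i\in\mathcal{I}$, $o\in\mathcal{O}$, $\mathbf{x}\in\mathcal{X}^{\mathcal{I}\setminus\{i\}}$ let $\mathrm{Fix}(s,i,o,\mathbf{x}):=\{x_i\in\mathcal{X}\mid s(\mathbf{x}\cup\{(i,x_i)\})(o)=x_i\}$. Let $\Gamma$ assign to each $s\in\mathfrak{S}_{\mathcal{I},\mathcal{O}}$ a set of unordered pairs $\{i,o\}$, $i\in\mathcal{I}$, $o\in\mathcal{O}$, with $\mathrm{Fix}(s,i,o,\mathbf{x})\neq\emptyset$ for all $\mathbf{x}$, and let $\phi$ be a family of functions $\phi^s_{i,o}:\mathcal{X}^{\mathcal{I}\setminus\{i\}}\to\mathcal{X}$ with $\phi^s_{i,o}(\mathbf{x})\in\mathrm{Fix}(s,i,o,\mathbf{x})$. Define $\lambda(s)=\mathcal{I}\cup\mathcal{O}$; $s_1\parallel s_2$ (for $s_j\in\mathfrak{S}_{\mathcal{I}_j,\mathcal{O}_j}$,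 all four sets pairwise disjoint) by $(s_1\parallel s_2)(\mathbf{x})(o_j)=s_j(\mathbf{x}|_{\mathcal{I}_j})(o_j)$; and $\gamma_{i,o}(s)(\mathbf{x})=s(\mathbf{x}\cup\{(i,\phi^s_{i,o}(\mathbf{x}))\})|_{\mathcal{O}\setminus\{o\}}$ for $\{i,o\}\in\Gamma(s)$. If $\mathfrak{S}$ is closed under $\parallel,\gamma$ and $\{i,o\}\in\Gamma(s_1\parallel s_2)\iff\{i,o\}\in\Gamma(s_j)$ for $i,o\in\lambda(s_j)$, the resulting $(\mathfrak{S},\lambda,\parallel,\Gamma,\gamma)$ is a functional $\Lambda$-system algebra over $\mathcal{X}$. It has consistently chosen fixed points if there exists such a family $\phi$ producing the same $(\mathfrak{S},\lambda,\parallel,\Gamma,\gamma)$ such that for all $s\in\mathfrak{S}_{\mathcal{I},\mathcal{O}}$, $s'\in\mathfrak{S}_{\mathcal{I}',\mathcal{O}'}$, $\{i,o\}\in\Gamma(s)\cap\Gamma(s')$, $\mathbf{x}\in\mathcal{X}^{\mathcal{I}\setminus\{i\}}$, $\mathbf{x}'\in\mathcal{X}^{\mathcal{I}'\setminus\{i\}}$: $\mathrm{Fix}(s,i,o,\mathbf{x})=\mathrm{Fix}(s',i,o,\mathbf{x}')$ implies $\phi^s_{i,o}(\mathbf{x})=\phi^{s'}_{i,o}(\mathbf{x}')$. $\Gamma$ permits reordering if for all $s$, $\{i,o\}\in\Gamma(s)$, $\{i',o'\}\in\Gamma(\gamma_{i,o}(s))$ we have $\{i',o'\}\in\Gamma(s)$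 and $\{i,o\}\in\Gamma(\gamma_{i',o'}(s))$; connection-order invariance means additionally $\gamma_{i',o'}(\gamma_{i,o}(s))=\gamma_{i,o}(\gamma_{i',o'}(s))$. Composition-order invariance means connection-order invariance, $\parallel$ associative and commutative, and $\gamma_{i,o}(s_1)\parallel s_2=\gamma_{i,o}(s_1\parallel s_2)$ whenever $\lambda(s_1)\cap\lambda(s_2)=\emptyset$ and $\{i,o\}\in\Gamma(s_1)$. *)

(* Defs.v *)
From HB Require Import structures.
From mathcomp Require Import all_boot finmap.
Unset Printing Implicit Defensive.
Local Open Scope fset_scope.

Section SystemAlgebra.
Context {L : choiceType} {X : Type}.

(* The index sets are part
   of the data (so lambda(s) = I \cup O is well defined). *)
Record sys := Sys {
  sI : {fset L};
  sO : {fset L};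
  sfun : (sI -> X) -> (sO -> X) }.

Definition lam (s : sys) : {fset L} := sI s `|` sO s.

Definition restr {A B : {fset L}} (H : B `<=` A) (y : A -> X) : B -> X :=
  fun b => y (fincl H b).

(* x \cup {(i, xi)} for x : X^{I \ {i}} *)
Definition ext {I : {fset L}} {i : L} (x : (I `\ i) -> X) (xi : X) : I -> X :=
  fun l => match insub (fsval l) with Some l' => x l' | None => xi end.

Definition outv {O : {fset L}} (y : O -> X) (o : L) : option X :=
  omap y (insub o).

Definition Fix (s : sys) (i o : L) (x : (sI s `\ i) -> X) (xi : X) : Prop :=
  outv (sfun s (ext x xi)) o = Some xi.

Lemma inU_r {A B : {fset L}} (a : A `|` B) : fsval a \notin A -> fsval a \in B.
Proof. by case: a => a /= /fsetUP [->|]. Qed.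

Definition par (s1 s2 : sys) : sys :=
  @Sys (sI s1 `|` sI s2) (sO s1 `|` sO s2)
    (fun x o =>
       (if fsval o \in sO s1 as b return (fsval o \in sO s1) = b -> X
        then fun h => sfun s1 (restr (fsubsetUl _ _) x) [` h]
        else fun h => sfun s2 (restr (fsubsetUr _ _) x)
                        [` inU_r o (negbT h)]) (erefl _)).

Definition fpfamily := forall (s : sys) (i o : L), ((sI s `\ i) -> X) -> X.

Definition gamma (phi : fpfamily) (i o : L) (s : sys) : sys :=
  @Sys (sI s `\ i) (sO s `\ o)
    (fun x => restr (fsubsetDl _ _) (sfun s (ext x (phi s i o x)))).

(* Gamma(s) is represented as a relation G s i o meaning {i,o} \in Gamma(s),
   oriented so that i is the input and o the output label. *)
Definition valid_family (S : sys -> Prop) (G : sys -> L -> L -> Prop)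
  (phi : fpfamily) : Prop :=
  forall s i o x, S s -> G s i o -> Fix s i o x (phi s i o x).

Definition functional_system_algebra (S : sys -> Prop)
  (G : sys -> L -> L -> Prop) (phi : fpfamily) : Prop :=
  (forall s, S s -> [disjoint sI s & sO s]) /\
  (forall s i o, S s -> G s i o ->
     [/\ i \in sI s, o \in sO s & forall x, exists xi, Fix s i o x xi]) /\
  valid_family S G phi /\
  (forall s1 s2, S s1 -> S s2 -> [disjoint lam s1 & lam s2] -> S (par s1 s2)) /\
  (forall s i o, S s -> G s i o -> S (gamma phi i o s)) /\
  (forall s1 s2, S s1 -> S s2 -> [disjoint lam s1 & lam s2] ->
         forall i o,
           (i \in lam s1 -> o \in lam s1 -> (G (par s1 s2) i o <-> G s1 i o)) /\
           (i \in lam s2 -> o \in lam s2 -> (G (par s1 s2) i o <-> G s2 i o))).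

Definition consistently_chosen_fixed_points (S : sys -> Prop)
  (G : sys -> L -> L -> Prop) (phi : fpfamily) : Prop :=
  exists phi' : fpfamily,
    [/\ valid_family S G phi',
        (forall s i o, S s -> G s i o -> gamma phi' i o s = gamma phi i o s) &
        (forall s s' i o (x : (sI s `\ i) -> X) (x' : (sI s' `\ i) -> X),
           S s -> S s' -> G s i o -> G s' i o ->
           (forall xi, Fix s i o x xi <-> Fix s' i o x' xi) ->
           phi' s i o x = phi' s' i o x')].

Definition permits_reordering (S : sys -> Prop) (G : sys -> L -> L -> Prop)
  (phi : fpfamily) : Prop :=
  forall s i o i' o', S s -> G s i o -> G (gamma phi i o s) i' o' ->
    G s i' o' /\ G (gamma phi i' o' s) i o.

Definition connection_order_invariant (S : sys -> Prop)
  (G : sys -> L -> L -> Prop) (phi : fpfamily) : Prop :=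
  permits_reordering S G phi /\
  forall s i o i' o', S s -> G s i o -> G (gamma phi i o s) i' o' ->
    gamma phi i' o' (gamma phi i o s) = gamma phi i o (gamma phi i' o' s).

Definition composition_order_invariant (S : sys -> Prop)
  (G : sys -> L -> L -> Prop) (phi : fpfamily) : Prop :=
  [/\ connection_order_invariant S G phi,
      (forall s1 s2 s3, S s1 -> S s2 -> S s3 ->
         [disjoint lam s1 & lam s2] -> [disjoint lam s1 & lam s3] ->
         [disjoint lam s2 & lam s3] ->
         par (par s1 s2) s3 = par s1 (par s2 s3)),
      (forall s1 s2, S s1 -> S s2 -> [disjoint lam s1 & lam s2] ->
         par s1 s2 = par s2 s1) &
      (forall s1 s2 i o, S s1 -> S s2 -> [disjoint lam s1 & lam s2] ->
         G s1 i o -> par (gamma phi i o s1) s2 = gamma phi i o (par s1 s2))].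

End SystemAlgebra.

(* Main.v *)
Require Import Defs.
From mathcomp Require Import all_boot finmap.
From Stdlib Require Import FunctionalExtensionality.
Local Open Scope fset_scope.

Section Aux.
Context {L : choiceType} {X : Type}.

Definition agree {A B : {fset L}} (x : A -> X) (y : B -> X) :=
  forall a b, fsval a = fsval b -> x a = y b.

Lemma agree_eq {A : {fset L}} (x y : A -> X) : agree x y -> x = y.
Proof. move=> H; apply: functional_extensionality => a; exact: H. Qed.

Lemma agree_refl {A : {fset L}} (x : A -> X) : agree x x.
Proof. by move=> a b /val_inj ->. Qed.

Lemma agree_sym {A B : {fset L}} (x : A -> X) (y : B -> X) : agree x y -> agree y x.
Proof. by move=> H a b e; symmetry; apply: H. Qed.

Lemma agree_restr_l {A B C : {fset L}} (H : C `<=` A) (x : A -> X) (y : B -> X) :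
  agree x y -> agree (restr H x) y.
Proof. by move=> Hx a b e; apply: Hx. Qed.

Lemma agree_restr_r {A B C : {fset L}} (H : C `<=` B) (x : A -> X) (y : B -> X) :
  agree x y -> agree x (restr H y).
Proof. by move=> Hx a b e; apply: Hx. Qed.

Lemma sfun_agree (s : @sys L X) x y : agree x y -> agree (sfun s x) (sfun s y).
Proof. by move=> /agree_eq -> ; apply: agree_refl. Qed.

Lemma ext_agree {I J : {fset L}} (i : L) (x : (I `\ i) -> X) (y : (J `\ i) -> X) xi :
  agree x y -> agree (ext x xi) (ext y xi).
Proof.
move=> H a b e; rewrite /ext.
case: insubP => [u Pu Hu|Nu]; case: insubP => [v Pv Hv|Nv] //.
- by apply: H; rewrite Hu Hv.
- exfalso; move: Pu Nv; rewrite !in_fsetD1 (fsvalP a) (fsvalP b) e.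
  by move=> ->.
- exfalso; move: Pv Nu; rewrite !in_fsetD1 (fsvalP a) (fsvalP b) e.
  by move=> ->.
Qed.

Lemma ext_i {I : {fset L}} (i : L) (x : (I `\ i) -> X) xi a :
  fsval a = i -> ext x xi a = xi.
Proof.
move=> e; rewrite /ext insubN //.
by rewrite in_fsetD1 e eqxx.
Qed.

Lemma dep_if (b : bool) (P : b = true) (T : Type) (f : b = true -> T)
  (g : b = false -> T) :
  (if b as b' return b = b' -> T then f else g) (erefl b) = f P.
Proof. by move: P f g; case: b => P f g //; rewrite (eq_irrelevance P erefl). Qed.

Lemma dep_if_f (b : bool) (P : b = false) (T : Type) (f : b = true -> T)
  (g : b = false -> T) :
  (if b as b' return b = b' -> T then f else g) (erefl b) = g P.
Proof. by move: P f g; case: b => P f g //; rewrite (eq_irrelevance P erefl). Qed.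

Lemma par_l (s1 s2 : @sys L X) x (y : sI s1 -> X) a a1 :
  agree x y -> fsval a = fsval a1 -> fsval a \in sO s1 ->
  sfun (par s1 s2) x a = sfun s1 y a1.
Proof.
move=> H e h. rewrite /par /= (dep_if _ h).
apply: sfun_agree => //. exact: agree_restr_l.
Qed.

Lemma par_r (s1 s2 : @sys L X) x (y : sI s2 -> X) a a2 :
  agree x y -> fsval a = fsval a2 -> fsval a \notin sO s1 ->
  sfun (par s1 s2) x a = sfun s2 y a2.
Proof.
move=> H e h. rewrite /par /= (dep_if_f _ (negbTE h)).
apply: sfun_agree => //. exact: agree_restr_l.
Qed.

Lemma gamma_val phi i o (s : @sys L X) x a b : fsval a = fsval b ->
  sfun (gamma phi i o s) x a = sfun s (ext x (phi s i o x)) b.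
Proof. by move=> e /=; rewrite /restr; congr sfun; apply: val_inj. Qed.

Lemma sys_ext (s1 s2 : @sys L X) : sI s1 = sI s2 -> sO s1 = sO s2 ->
  (forall x1 x2, agree x1 x2 -> agree (sfun s1 x1) (sfun s2 x2)) -> s1 = s2.
Proof.
case: s1 => I1 O1 f1; case: s2 => I2 O2 f2 /= e1 e2; subst => H.
f_equal; apply: functional_extensionality => x.
apply: agree_eq; apply: H; exact: agree_refl.
Qed.

Lemma outv_agree {O O' : {fset L}} (y : O -> X) (z : O' -> X) o :
  o \in O -> o \in O' -> (forall a b, fsval a = o -> fsval b = o -> y a = z b) ->
  outv y o = outv z o.
Proof.
move=> h h' H; rewrite /outv (insubT (fun l => l \in O) h) (insubT (fun l => l \in O') h') /=.
by congr Some; apply: H.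
Qed.


Lemma par_l' (s1 s2 : @sys L X) x a (h : fsval a \in sO s1) :
  sfun (par s1 s2) x a = sfun s1 (restr (fsubsetUl _ _) x) [` h].
Proof. by apply: par_l => //; apply: agree_restr_r; apply: agree_refl. Qed.

Lemma par_r' (s1 s2 : @sys L X) x a (h : fsval a \notin sO s1) :
  sfun (par s1 s2) x a = sfun s2 (restr (fsubsetUr _ _) x) [` inU_r a h].
Proof. by apply: par_r => //; apply: agree_restr_r; apply: agree_refl. Qed.

Lemma ext_val {I : {fset L}} (i : L) (x : (I `\ i) -> X) xi (c : I) (d : I `\ i) :
  fsval c = fsval d -> ext x xi c = x d.
Proof.
move=> e; rewrite /ext; case: insubP => [u _ Hu|Nu].
- by congr x; apply: val_inj; rewrite Hu.
- by exfalso; move: Nu; rewrite e (fsvalP d).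
Qed.

Lemma memD1 (A : {fset L}) l x : l \in A `\ x -> (l \in A) /\ (l != x).
Proof. by rewrite in_fsetD1 => /andP[]. Qed.

Lemma disj_mem (s1 s2 : @sys L X) l : [disjoint lam s1 & lam s2] ->
  l \in lam s1 -> l \notin lam s2.
Proof. by move=> /fdisjointP H; apply: H. Qed.

End Aux.

Lemma orN (b : bool) : b \/ ~~ b.
Proof. by case: b; [left|right]. Qed.

Theorem lemma4p6 (L : choiceType) (X : Type) (S : @sys L X -> Prop)
  (G : @sys L X -> L -> L -> Prop) (phi : @fpfamily L X) :
  functional_system_algebra S G phi ->
  consistently_chosen_fixed_points S G phi ->
  (composition_order_invariant S G phi <-> connection_order_invariant S G phi).
Proof.
move=> [Hdisj [HG [Hval [Hpar [Hgam Hcomp]]]]] [phi' [Hval' Hgeq Hcons]].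
split; first by case.
move=> Hcoi; split => //.
- move=> s1 s2 s3 _ _ _ _ _ _; apply: sys_ext; [by rewrite /= fsetUA | by rewrite /= fsetUA |].
  move=> x1 x2 Hx a b e.
  have [h1|h1] := orN (fsval a \in sO s1).
  + have h12 : fsval a \in sO s1 `|` sO s2 by rewrite in_fsetU h1.
    have h1' : fsval b \in sO s1 by rewrite -e.
    rewrite (par_l' (par s1 s2) s3 _ _ h12) (par_l' s1 s2 _ [` h12] h1) (par_l' s1 (par s2 s3) _ _ h1').
    apply: sfun_agree => //.
    by do 2 apply: agree_restr_l; apply: agree_restr_r.
  have [h2|h2] := orN (fsval a \in sO s2).
  + have h12 : fsval a \in sO s1 `|` sO s2 by rewrite in_fsetU h2 orbT.
    have h1' : fsval b \notin sO s1 by rewrite -e.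
    have h2' : fsval b \in sO s2 by rewrite -e.
    rewrite (par_l' (par s1 s2) s3 _ _ h12) (par_r' s1 s2 _ [` h12] h1) (par_r' s1 (par s2 s3) _ _ h1') (par_l' s2 s3 _ [` inU_r b h1'] h2').
    apply: sfun_agree => //.
    by do 2 apply: agree_restr_l; do 2 apply: agree_restr_r.
  + have h12 : fsval a \notin sO s1 `|` sO s2 by rewrite in_fsetU negb_or h1 h2.
    have h1' : fsval b \notin sO s1 by rewrite -e.
    have h2' : fsval b \notin sO s2 by rewrite -e.
    rewrite (par_r' (par s1 s2) s3 _ _ h12) (par_r' s1 (par s2 s3) _ _ h1') (par_r' s2 s3 _ [` inU_r b h1'] h2').
    apply: sfun_agree => //.
    by apply: agree_restr_l; do 2 apply: agree_restr_r.
- move=> s1 s2 _ _ D; apply: sys_ext; [by rewrite /= fsetUC | by rewrite /= fsetUC |].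
  move=> x1 x2 Hx a b e.
  have [h1|h1] := orN (fsval a \in sO s1).
  + have h2 : fsval b \notin sO s2.
      have := disj_mem s1 s2 (fsval a) D; rewrite /lam !in_fsetU h1 orbT => /(_ isT).
      by rewrite negb_or e => /andP[].
    have h1' : fsval b \in sO s1 by rewrite -e.
    rewrite (par_l' s1 s2 _ _ h1) (par_r' s2 s1 _ _ h2).
    apply: sfun_agree => //.
    by apply: agree_restr_l; apply: agree_restr_r.
  + have h2 : fsval b \in sO s2 by rewrite -e; apply: inU_r.
    rewrite (par_r' s1 s2 _ _ h1) (par_l' s2 s1 _ _ h2).
    apply: sfun_agree => //.
    by apply: agree_restr_l; apply: agree_restr_r.
- move=> s1 s2 i o S1 S2 D G1.
  have [iI1 oO1 _] := HG _ _ _ S1 G1.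
  have Sp := Hpar _ _ S1 S2 D.
  have Gp : G (par s1 s2) i o.
    by apply/(proj1 (Hcomp _ _ S1 S2 D i o)) => //; rewrite /lam in_fsetU ?iI1 ?oO1 ?orbT.
  rewrite -(Hgeq _ _ _ S1 G1) -(Hgeq _ _ _ Sp Gp).
  have iI2 : i \notin sI s2.
    have := disj_mem s1 s2 (i) D; rewrite /lam !in_fsetU iI1 => /(_ isT).
    by rewrite negb_or => /andP[].
  have oO2 : o \notin sO s2.
    have := disj_mem s1 s2 (o) D; rewrite /lam !in_fsetU oO1 orbT => /(_ isT).
    by rewrite negb_or => /andP[].
  have Hphi : forall x y, agree x y -> phi' (par s1 s2) i o x = phi' s1 i o y.
    move=> x y Hxy; apply: Hcons => // xi; rewrite /Fix.
    rewrite (@outv_agree _ _ _ _ _ (sfun s1 (ext y xi)) o) //=; first by rewrite in_fsetU oO1.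
    move=> a b ea eb; apply: par_l; [exact: ext_agree Hxy | by rewrite ea eb | by rewrite ea].
  apply: sys_ext.
  + rewrite /=; apply/fsetP => l; rewrite !(in_fsetU, in_fsetD1).
    by case: (eqVneq l i) => [->|] //=; rewrite (negbTE iI2).
  + rewrite /=; apply/fsetP => l; rewrite !(in_fsetU, in_fsetD1).
    by case: (eqVneq l o) => [->|] //=; rewrite (negbTE oO2).
  move=> x1 x2 Hx a b e.
  have [hb hbo] := memD1 _ _ _ (fsvalP b).
  have [h1|h1] := orN (fsval a \in sO s1 `\ o).
  + have [h1' _] := memD1 _ _ _ h1.
    have hb1 : fsval b \in sO s1 by rewrite -e.
    rewrite (par_l' (gamma phi' i o s1) s2 _ _ h1) (gamma_val _ _ _ _ _ _ ([` h1'] : sO s1)) //.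
    rewrite (gamma_val _ _ _ _ _ _ ([` hb] : sO (par s1 s2))) //.
    rewrite (par_l' s1 s2 _ [` hb] hb1).
    rewrite (Hphi x2 (restr (fsubsetUl _ _) x1)); last first.
      by apply: agree_restr_r; apply: agree_sym.
    apply: sfun_agree => //.
    apply: agree_restr_r; apply: ext_agree; apply: agree_restr_l; exact: Hx.
  + have hb1 : fsval b \notin sO s1.
      apply/negP => hb1; move: h1; rewrite e in_fsetD1 hb1 andbT.
      by rewrite hbo.
    rewrite (par_r' (gamma phi' i o s1) s2 _ _ h1) (gamma_val _ _ _ _ _ _ ([` hb] : sO (par s1 s2))) //.
    rewrite (par_r' s1 s2 _ [` hb] hb1).
    apply: sfun_agree => //.
    move=> a' b' e'; rewrite /restr.
    have hd : fsval b' \in (sI s1 `|` sI s2) `\ i.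
      rewrite in_fsetD1 in_fsetU (fsvalP b') orbT andbT.
      by apply/eqP => E; move: iI2; rewrite -E (fsvalP b').
    transitivity (x2 [` hd]); first by apply: Hx.
    by symmetry; apply: ext_val.
Qed.
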